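(* Let $\mathcal{K}\subseteq\mathbb{R}\cup\{\pm\infty\}$ have nonzero Lebesgue measure, let $\varpi:\mathcal{K}\to\mathbb{R}_{\geq 0}$ be Lebesgue integrable with only countably (finitely or infinitely) many zeros, and let $d\in\mathbb{N}$. Let $\mathbf{f}(\cdot)=\mathrm{Col}_{i=1}^d f_i(\cdot)\in\mathbb{L}^2_{\varpi}(\mathcal{K};\mathbb{R}^d)$ satisfy $$\int_{\mathcal{K}}\varpi(\tau)\mathbf{f}(\tau)\mathbf{f}^\top(\tau)\,d\tau\succ 0 .$$ For $n\in\mathbb{N}$ define $F(\tau)=\mathbf{f}(\tau)\otimes I_n\in\mathbb{R}^{dn\times n}$ and the matrix $\mathsf{F}\in\mathbb{R}^{d\times d}$ by $\mathsf{F}^{-1}=\int_{\mathcal{K}}\varpi(\tau)\mathbf{f}(\tau)\mathbf{f}^\top(\tau)\,d\tau$. Then for all $\mathbf{x}(\cdot)\in\mathbb{L}^2_{\varpi}(\mathcal{K};\mathbb{R}^n)$ and all symmetric $U\succeq 0$ in $\mathbb{R}^{n\times n}$, $$\int_{\mathcal{K}}\varpi(\tau)\mathbf{x}^\top(\tau)U\mathbf{x}(\tau)\,d\tau\;\geq\;\boldsymbol{\vartheta}^\top(\mathsf{F}\otimes U)\boldsymbol{\vartheta},\qquad \boldsymbol{\vartheta}:=\int_{\mathcal{K}}\varpi(\tau)F(\tau)\mathbf{x}(\tau)\,d\tau\in\mathbb{R}^{dn}.$$ Moreover (optimality), if $U\succ 0$, then for every $\boldsymbol{\omega}\in\mathbb{R}^{dn}$,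 $$2\boldsymbol{\vartheta}^\top(I_d\otimes U)\boldsymbol{\omega}-\boldsymbol{\omega}^\top(\mathsf{F}^{-1}\otimes U)\boldsymbol{\omega}\;\leq\;\boldsymbol{\vartheta}^\top(\mathsf{F}\otimes U)\boldsymbol{\vartheta},$$ with equality for $\boldsymbol{\omega}=(\mathsf{F}\otimes I_n)\boldsymbol{\vartheta}$; here each left-hand side is a lower bound for $\int_{\mathcal{K}}\varpi\,\mathbf{x}^\top U\mathbf{x}\,d\tau$ (obtained from $\int_{\mathcal{K}}\varpi(\tau)(\mathbf{x}(\tau)-F^\top(\tau)\boldsymbol{\omega})^\top U(\mathbf{x}(\tau)-F^\top(\tau)\boldsymbol{\omega})\,d\tau\ge 0$), so the bound above is the largest among them.
   Context: For $m\in\mathbb{N}$, $\mathbb{L}^2_{\varpi}(\mathcal{K};\mathbb{R}^m)$ denotes the set of Lebesgue integrable functions $\phi:\mathcal{K}\to\mathbb{R}^m$ with $\int_{\mathcal{K}}\varpi(\tau)\phi^\top(\tau)\phi(\tau)\,d\tau<\infty$. $\mathrm{Col}_{i=1}^d f_i$ denotes the column vector $[f_1,\dots,f_d]^\top$; $\otimes$ is the Kronecker product and $I_n$ the $n\times n$ identity. *)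

(* Defs.v *)
From HB Require Import structures.
From mathcomp Require Import all_boot all_order all_algebra.
From mathcomp Require Import all_classical all_reals all_analysis.
From mathcomp Require Export mxtens.
Set Implicit Arguments. Unset Strict Implicit. Unset Printing Implicit Defensive.
Import Order.TTheory GRing.Theory Num.Theory.
Local Open Scope ring_scope.
Local Open Scope classical_set_scope.

(* Kronecker product: (A *t B) is mathcomp-real-closed's tensmx (row-major indexing). *)

Definition mxint (R : realType) m n (K : set R) (A : R -> 'M[R]_(m, n)) : 'M[R]_(m, n) :=
  \matrix_(i, j) Rintegral (@lebesgue_measure R) K (fun t => A t i j).

Definition posdef (R : realType) n (A : 'M[R]_n) : Prop :=
  A^T = A /\ forall v : 'cV[R]_n, v != 0 -> 0 < (v^T *m A *m v) 0 0.

Definition psd (R : realType) n (A : 'M[R]_n) : Prop :=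
  A^T = A /\ forall v : 'cV[R]_n, 0 <= (v^T *m A *m v) 0 0.

Definition L2w (R : realType) m (K : set R) (w : R -> R) (phi : R -> 'cV[R]_m) : Prop :=
  (forall i, measurable_fun K (fun t => phi t i 0)) /\
  (@lebesgue_measure R).-integrable K (fun t => (w t * ((phi t)^T *m phi t) 0 0)%:E).

Definition Fkron (R : realType) d n (f : R -> 'cV[R]_d) (t : R) : 'M[R]_(d * n, n) :=
  castmx (erefl (d * n), mul1n n) (f t *t (1%:M : 'M[R]_n)).

(* Main.v *)
Require Import Defs.
From HB Require Import structures.
From mathcomp Require Import all_boot all_order all_algebra.
From mathcomp Require Import all_classical all_reals all_analysis.
From mathcomp Require Import mxtens lra ring.
Import Order.TTheory GRing.Theory Num.Theory.
Local Open Scope ring_scope.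
Local Open Scope classical_set_scope.


Definition ip {R : realType} {m n} (P Q : 'M[R]_(m,n)) : R := \tr (P^T *m Q).
Definition unvec {R : realType} {m n} (v : 'cV[R]_(m*n)) : 'M[R]_(m,n) :=
  \matrix_(i,j) v (mxtens_index (i,j)) 0.

Lemma sum_tens {R : realType} m n (F : 'I_(m*n) -> R) :
  \sum_p F p = \sum_i \sum_j F (mxtens_index (i,j)).
Proof.
rewrite pair_big /=.
rewrite (reindex (fun p => @mxtens_index m n p)) /=.
  by apply: eq_bigr => -[i j].
by exists (@mxtens_unindex m n) => p _; rewrite (mxtens_indexK, mxtens_unindexK).
Qed.

Lemma sum_delta {R : realType} n (j : 'I_n) (g : 'I_n -> R) :
  \sum_l (1%:M : 'M[R]_n) j l * g l = g j.
Proof.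
rewrite (bigD1 j) //= big1 ?addr0; first by rewrite mxE eqxx mul1r.
by move=> l /negbTE; rewrite mxE eq_sym => ->; rewrite mul0r.
Qed.

Lemma ipC {R : realType} m n (P Q : 'M[R]_(m,n)) : ip P Q = ip Q P.
Proof. by rewrite /ip -mxtrace_tr trmx_mul trmxK. Qed.

Lemma ip_mull {R : realType} m p n (A : 'M[R]_(p,m)) (P : 'M[R]_(m,n)) Q :
  ip (A *m P) Q = ip P (A^T *m Q).
Proof. by rewrite /ip trmx_mul mulmxA. Qed.

Lemma ip_mulr {R : realType} m p n (P : 'M[R]_(m,p)) (B : 'M[R]_(p,n)) Q :
  ip (P *m B) Q = ip P (Q *m B^T).
Proof. by rewrite /ip trmx_mul -mulmxA mxtrace_mulC mulmxA. Qed.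

Lemma ipDr {R : realType} m n (P Q1 Q2 : 'M[R]_(m,n)) : ip P (Q1 + Q2) = ip P Q1 + ip P Q2.
Proof. by rewrite /ip mulmxDr mxtraceD. Qed.

Lemma ipBr {R : realType} m n (P Q1 Q2 : 'M[R]_(m,n)) : ip P (Q1 - Q2) = ip P Q1 - ip P Q2.
Proof. by rewrite /ip mulmxBr linearB. Qed.

Lemma ipBl {R : realType} m n (P1 P2 Q : 'M[R]_(m,n)) : ip (P1 - P2) Q = ip P1 Q - ip P2 Q.
Proof. by rewrite ipC ipBr [ip Q P1]ipC [ip Q P2]ipC. Qed.

Lemma quad_tens {R : realType} m n (A : 'M[R]_m) (U : 'M[R]_n) (a b : 'cV[R]_(m*n)) :
  (a^T *m (A *t U) *m b) 0 0 = ip (unvec a) (A *m unvec b *m U^T).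
Proof.
rewrite -mulmxA mxE /ip /mxtrace sum_tens.
under [RHS]eq_bigr do rewrite mxE.
rewrite [RHS]exchange_big /=.
apply: eq_bigr => i _; apply: eq_bigr => j _.
rewrite !mxE sum_tens; congr (_ * _).
rewrite exchange_big /=.
apply: eq_bigr => l _; rewrite !mxE mulr_suml.
apply: eq_bigr => k _.
by rewrite (tensmxE A U) !mxE mulrAC.
Qed.

Lemma posdef_unit {R : realType} n (G : 'M[R]_n) : posdef G -> G \in unitmx.
Proof.
move=> [_ pd]; rewrite -row_free_unit -kermx_eq0.
apply/rowV0P => u; rewrite sub_kermx => /eqP uG0.
apply/eqP/negPn/negP => nz.
have : u^T != 0 by apply: contra nz => /eqP/(congr1 trmx); rewrite trmxK trmx0 => ->.
move/pd; rewrite trmxK uG0 mul0mx mxE ltxx //.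
Qed.

Definition RI {R : realType} (K : set R) (g : R -> R) :=
  (@lebesgue_measure R).-integrable K (EFin \o g).

Lemma RI_sum {R : realType} (K : set R) (mK : measurable K) m (g : 'I_m -> R -> R) :
  (forall i, RI K (g i)) -> RI K (fun t => \sum_(i < m) g i t).
Proof.
move=> hg.
have := @integrable_sum _ _ _ (@lebesgue_measure R) K mK _ (index_enum 'I_m) xpredT
  (fun i => EFin \o g i) (fun i _ => hg i).
apply: eq_integrable => // t _ /=; by rewrite sumEFin.
Qed.

Lemma Rint_sum {R : realType} (K : set R) (mK : measurable K) m (g : 'I_m -> R -> R) :
  (forall i, RI K (g i)) ->
  Rintegral (@lebesgue_measure R) K (fun t => \sum_(i < m) g i t) =
  \sum_(i < m) Rintegral (@lebesgue_measure R) K (g i).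
Proof.
elim: m g => [|m IH] g hg.
  by rewrite big_ord0; under eq_Rintegral do rewrite big_ord0;
     rewrite Rintegral_cst // mul0r.
under eq_Rintegral do rewrite big_ord_recr /=.
rewrite big_ord_recr /= RintegralD //.
  by rewrite (IH (fun i : 'I_m => g (widen_ord (leqnSn m) i))) // => i; exact (hg _).
- exact (@RI_sum _ K mK _ (fun i : 'I_m => g (widen_ord (leqnSn m) i)) (fun i => hg _)).
- exact (hg ord_max).
Qed.

Lemma RI_scale {R : realType} (K : set R) (mK : measurable K) (c : R) g :
  RI K g -> RI K (fun t => c * g t).
Proof.
move=> hg; have := @integrableZl _ _ _ (@lebesgue_measure R) K mK c _ hg.
by apply: eq_integrable => // t _ /=; rewrite EFinM.
Qed.

Lemma RI_add {R : realType} (K : set R) (mK : measurable K) g h :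
  RI K g -> RI K h -> RI K (fun t => g t + h t).
Proof.
move=> hg hh; have := @integrableD _ _ _ (@lebesgue_measure R) K mK _ _ hg hh.
by apply: eq_integrable => // t _ /=; rewrite EFinD.
Qed.

Lemma RI_sub {R : realType} (K : set R) (mK : measurable K) g h :
  RI K g -> RI K h -> RI K (fun t => g t - h t).
Proof.
move=> hg hh; have := @integrableB _ _ _ (@lebesgue_measure R) K mK _ _ hg hh.
by apply: eq_integrable => // t _ /=; rewrite EFinB.
Qed.

Lemma sq_le_norm {R : realType} m (a : 'cV[R]_m) i :
  a i 0 ^+ 2 <= ((a^T *m a) 0 0).
Proof.
rewrite mxE (bigD1 i) //= mxE -expr2 lerDl.
by apply: sumr_ge0 => k _; rewrite mxE -expr2 sqr_ge0.
Qed.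

Lemma uv_le {R : realType} (u v : R) : 0 <= u -> 0 <= v -> u * v <= u ^+ 2 + v ^+ 2.
Proof.
move=> hu hv.
have [uv|vu] := leP u v.
  have h1 : u * v <= v ^+ 2 by rewrite expr2 ler_wpM2r.
  by apply: le_trans h1 _; rewrite lerDr sqr_ge0.
have h1 : u * v <= u ^+ 2 by rewrite expr2 ler_wpM2l // ltW.
by apply: le_trans h1 _; rewrite lerDl sqr_ge0.
Qed.

Lemma abs_prod_le {R : realType} (x y : R) : `|x * y| <= x ^+ 2 + y ^+ 2.
Proof.
rewrite normrM -[x ^+ 2](real_normK (num_real x)) -[y ^+ 2](real_normK (num_real y)).
by apply: uv_le.
Qed.

Lemma RI_prod {R : realType} (K : set R) (mK : measurable K) (w : R -> R)
  (w_ge0 : forall t, K t -> 0 <= w t) (w_int : RI K w) m p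
  (a : R -> 'cV[R]_m) (b : R -> 'cV[R]_p) :
  L2w K w a -> L2w K w b -> forall i j,
  RI K (fun t => w t * (a t i 0 * b t j 0)).
Proof.
move=> [ma ia] [mb ib] i j.
have mw : measurable_fun K w.
  by apply/measurable_realfun.measurable_EFinP; exact: (measurable_int _ w_int).
rewrite /RI; apply: (@le_integrable _ _ _ (@lebesgue_measure R) K _ _ (EFin \o (fun t => w t * ((a t)^T *m a t) 0 0 + w t * ((b t)^T *m b t) 0 0))).
- exact: mK.
- apply/measurable_realfun.measurable_EFinP; apply: measurable_realfun.measurable_funM => //.
  apply: measurable_realfun.measurable_funM; [exact: ma | exact: mb].
- move=> t Kt /=; rewrite lee_fin.
  have w0 := w_ge0 t Kt.
  have ha := @sq_le_norm _ _ (a t) i; have hb := @sq_le_norm _ _ (b t) j.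
  have hab := abs_prod_le (a t i 0) (b t j 0).
  have ha0 : 0 <= ((a t)^T *m a t) 0 0 := le_trans (sqr_ge0 _) ha.
  have hb0 : 0 <= ((b t)^T *m b t) 0 0 := le_trans (sqr_ge0 _) hb.
  rewrite [X in _ <= X]ger0_norm; last by rewrite -mulrDr mulr_ge0 // addr_ge0.
  rewrite normrM (ger0_norm w0) -mulrDr; apply: ler_wpM2l => //.
  by apply: le_trans hab _; apply: lerD.
- exact: (@RI_add _ K mK (fun t => w t * ((a t)^T *m a t) 0 0) (fun t => w t * ((b t)^T *m b t) 0 0) ia ib).
Qed.

Lemma pair_int {R : realType} (K : set R) (mK : measurable K) (w : R -> R) p q
  (a : R -> 'cV[R]_p) (b : R -> 'cV[R]_q) (C : 'M[R]_(p,q)) :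
  (forall i j, RI K (fun t => w t * (a t i 0 * b t j 0))) ->
  ip (mxint K (fun t => w t *: (a t *m (b t)^T))) C =
    Rintegral (@lebesgue_measure R) K (fun t => w t * ((a t)^T *m C *m b t) 0 0)
  /\ RI K (fun t => w t * ((a t)^T *m C *m b t) 0 0).
Proof.
move=> hab.
have pw : forall t, w t * ((a t)^T *m C *m b t) 0 0 =
    \sum_j \sum_i C i j * (w t * (a t i 0 * b t j 0)).
  move=> t; rewrite mxE mulr_sumr; apply: eq_bigr => j _.
  rewrite mxE mulr_suml mulr_sumr; apply: eq_bigr => i _.
  by rewrite mxE; ring.
have hint : forall j, RI K (fun t => \sum_i C i j * (w t * (a t i 0 * b t j 0))).
  move=> j; exact (RI_sum _ mK _ (fun i t => C i j * (w t * (a t i 0 * b t j 0)))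
     (fun i => RI_scale _ mK (C i j) _ (hab i j))).
split; last first.
  have := RI_sum _ mK _ (fun j t => \sum_i C i j * (w t * (a t i 0 * b t j 0))) hint.
  by apply: eq_integrable => // t _ /=; rewrite pw.
under eq_Rintegral => t _ do rewrite pw.
rewrite (Rint_sum _ mK) //.
rewrite /ip /mxtrace; apply: eq_bigr => j _.
rewrite (Rint_sum _ mK); last by move=> i; exact (RI_scale _ mK (C i j) _ (hab i j)).
rewrite mxE; apply: eq_bigr => i _.
rewrite RintegralZl //; last exact: hab.
rewrite !mxE mulrC; congr (_ * _).
apply: eq_Rintegral => t _; rewrite !mxE big_ord1 !mxE.
by [].
Qed.

Lemma ip_swap {R : realType} m n (W : 'M[R]_(m,n)) (G : 'M[R]_m) (M : 'M[R]_(m,n)) :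
  ip W (G *m M) = ip G (W *m M^T).
Proof. by rewrite -[M in LHS]trmxK -ip_mulr ipC. Qed.

Lemma trmxB_ {R : realType} m n (a b : 'M[R]_(m,n)) : (a - b)^T = a^T - b^T.
Proof. by apply/matrixP => i j; rewrite !mxE. Qed.

Lemma quad_expand {R : realType} d n (U : 'M[R]_n) (W : 'M[R]_(d,n)) (f : 'cV[R]_d) (x : 'cV[R]_n) :
  U^T = U ->
  ((x - W^T *m f)^T *m U *m (x - W^T *m f)) 0 0 =
  (x^T *m U *m x) 0 0 - 2 * ((f^T *m (W *m U) *m x) 0 0)
  + (f^T *m (W *m (W *m U)^T) *m f) 0 0.
Proof.
move=> hU.
have e : x^T *m U *m (W^T *m f) = (f^T *m (W *m U) *m x)^T.
  by rewrite !trmx_mul !trmxK hU !mulmxA.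
have e2 : (f^T *m (W *m (W *m U)^T) *m f) = (W^T *m f)^T *m U *m (W^T *m f).
  by rewrite !trmx_mul trmxK hU !mulmxA.
have e3 : (W^T *m f)^T *m U *m x = f^T *m (W *m U) *m x.
  by rewrite trmx_mul trmxK !mulmxA.
have M : (x - W^T *m f)^T *m U *m (x - W^T *m f) =
   x^T *m U *m x - (f^T *m (W *m U) *m x)^T - f^T *m (W *m U) *m x
   + f^T *m (W *m (W *m U)^T) *m f.
  rewrite trmxB_ mulmxBl !mulmxBr !mulmxBl e e2 e3 opprB addrA.
  by apply/matrixP => i j; rewrite !mxE; ring.
rewrite M !mxE.
ring.
Qed.

Lemma I1 {R : realType} (K : set R) (mK : measurable K) (w : R -> R)
  (w_ge0 : forall t, K t -> 0 <= w t) (w_int : RI K w) d (f : R -> 'cV[R]_d)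
  (f_L2 : L2w K w f) n (x : R -> 'cV[R]_n) (x_L2 : L2w K w x) (U : 'M[R]_n)
  (hU : psd U) (W : 'M[R]_(d,n)) :
  0 <= Rintegral (@lebesgue_measure R) K (fun t => w t * ((x t)^T *m U *m x t) 0 0)
     - 2 * ip (mxint K (fun t => w t *: (f t *m (x t)^T))) (W *m U)
     + ip W (mxint K (fun t => w t *: (f t *m (f t)^T)) *m W *m U).
Proof.
case: hU => hUs hUp.
have [P1 R1] := pair_int _ mK _ _ _ _ _ (W *m U) (RI_prod _ mK _ w_ge0 w_int _ _ _ _ f_L2 x_L2).
have [P2 R2] := pair_int _ mK _ _ _ _ _ (W *m (W *m U)^T) (RI_prod _ mK _ w_ge0 w_int _ _ _ _ f_L2 f_L2).
have [P3 R3] := pair_int _ mK _ _ _ _ _ U (RI_prod _ mK _ w_ge0 w_int _ _ _ _ x_L2 x_L2).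
rewrite -mulmxA ip_swap P1 P2.
rewrite -(@RintegralZl _ _ _ (@lebesgue_measure R) K _ 2 mK R1).
rewrite -(@RintegralB _ _ _ (@lebesgue_measure R) K _ _ mK R3 (RI_scale _ mK 2 _ R1)).
rewrite -(@RintegralD _ _ _ (@lebesgue_measure R) K _ _ mK (RI_sub _ mK _ _ R3 (RI_scale _ mK 2 _ R1)) R2).
apply: Rintegral_ge0 => t Kt.
have -> : w t * ((x t)^T *m U *m x t) 0 0 - 2 * (w t * ((f t)^T *m (W *m U) *m x t) 0 0) +
    w t * ((f t)^T *m (W *m (W *m U)^T) *m f t) 0 0 =
    w t * ((x t - W^T *m f t)^T *m U *m (x t - W^T *m f t)) 0 0.
  by rewrite quad_expand //; ring.
by apply: mulr_ge0; [exact: w_ge0 | exact: hUp].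
Qed.

Lemma unvec_kron1 {R : realType} m n (A : 'M[R]_m) (v : 'cV[R]_(m*n)) :
  unvec ((A *t (1%:M : 'M[R]_n)) *m v) = A *m unvec v.
Proof.
apply/matrixP => i j; rewrite !mxE sum_tens; apply: eq_bigr => k _.
rewrite !mxE.
under eq_bigr do rewrite (tensmxE A) -mulrA.
by rewrite -mulr_sumr (@sum_delta _ _ j (fun l => v (mxtens_index (k, l)) 0)).
Qed.

Lemma cast_mx1 n (l : 'I_n) : cast_ord (esym (mul1n n)) l = mxtens_index (ord0 : 'I_1, l).
Proof. by apply: val_inj => /=; rewrite mul0n add0n. Qed.

Lemma unvec_theta {R : realType} (K : set R) (w : R -> R) d n (f : R -> 'cV[R]_d) (x : R -> 'cV[R]_n) :
  unvec (mxint K (fun t => w t *: (Fkron n f t *m x t))) =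
  mxint K (fun t => w t *: (f t *m (x t)^T)).
Proof.
apply/matrixP => i j; rewrite !mxE.
apply: eq_Rintegral => t _; rewrite !mxE big_ord1 !mxE; congr (_ * _).
rewrite /Fkron.
under eq_bigr do rewrite castmxE cast_ord_id cast_mx1 (tensmxE (f t)) -mulrA.
by rewrite -mulr_sumr (@sum_delta _ _ j (fun l => x t l 0)).
Qed.

Lemma I0 {R : realType} (K : set R) (mK : measurable K) (w : R -> R)
  (w_ge0 : forall t, K t -> 0 <= w t) (w_int : RI K w) d (f : R -> 'cV[R]_d)
  (f_L2 : L2w K w f) n (U : 'M[R]_n) (hU : psd U) (W : 'M[R]_(d,n)) :
  0 <= ip W (mxint K (fun t => w t *: (f t *m (f t)^T)) *m W *m U).
Proof.
pose z : R -> 'cV[R]_n := fun _ => 0.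
have L0 : L2w K w z.
  split.
    move=> i; have -> : (fun t : R => z t i 0) = cst 0.
      by apply: boolp.funext => t; rewrite mxE.
    exact: measurable_cst.
  have -> : (fun t => (w t * ((z t)^T *m z t) 0 0)%:E) = cst 0%E.
    by apply: boolp.funext => t; rewrite /z trmx0 mul0mx mxE mulr0.
  exact (@integrable0 _ _ _ (@lebesgue_measure R) K).
have := I1 _ mK _ w_ge0 w_int _ _ f_L2 _ _ L0 _ hU W.
have J0 : Rintegral (@lebesgue_measure R) K (fun t => w t * ((z t)^T *m U *m z t) 0 0) = 0.
  under eq_Rintegral do rewrite /z mulmx0 mxE mulr0.
  by rewrite Rintegral_cst // mul0r.
have T0 : mxint K (fun t => w t *: (f t *m (z t)^T)) = 0.
  apply/matrixP => i j; rewrite !mxE.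
  under eq_Rintegral do rewrite /z trmx0 mulmx0 scaler0 mxE.
  by rewrite Rintegral_cst // mul0r.
rewrite J0 T0 /ip trmx0 mul0mx mxtrace0.
set q := \tr _.
lra.
Qed.

Theorem theorem1 (R : realType) (K : set R) (w : R -> R) (d : nat)
  (f : R -> 'cV[R]_d)
  (mK : measurable K) (K_pos : (0 < @lebesgue_measure R K)%E)
  (w_ge0 : forall t, K t -> 0 <= w t)
  (w_int : (@lebesgue_measure R).-integrable K (fun t => (w t)%:E))
  (w_zeros : countable [set t | K t /\ w t = 0])
  (f_L2 : L2w K w f)
  (gram_pd : posdef (mxint K (fun t => w t *: (f t *m (f t)^T)))) :
  let Finv := mxint K (fun t => w t *: (f t *m (f t)^T)) in
  let FF := invmx Finv in
  forall (n : nat) (x : R -> 'cV[R]_n), L2w K w x ->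
  let theta := mxint K (fun t => w t *: (Fkron n f t *m x t)) in
  forall U : 'M[R]_n,
    let J := Rintegral (@lebesgue_measure R) K
               (fun t => w t * ((x t)^T *m U *m x t) 0 0) in
    (psd U -> (theta^T *m (FF *t U) *m theta) 0 0 <= J) /\
    (posdef U ->
       (forall omega : 'cV[R]_(d * n),
          2 * (theta^T *m ((1%:M : 'M[R]_d) *t U) *m omega) 0 0
            - (omega^T *m (Finv *t U) *m omega) 0 0
          <= (theta^T *m (FF *t U) *m theta) 0 0) /\
       (forall omega : 'cV[R]_(d * n),
          2 * (theta^T *m ((1%:M : 'M[R]_d) *t U) *m omega) 0 0
            - (omega^T *m (Finv *t U) *m omega) 0 0
          <= J) /\
       (let omega0 := (FF *t (1%:M : 'M[R]_n)) *m theta in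
          2 * (theta^T *m ((1%:M : 'M[R]_d) *t U) *m omega0) 0 0
            - (omega0^T *m (Finv *t U) *m omega0) 0 0
          = (theta^T *m (FF *t U) *m theta) 0 0)).
Proof.
move=> Finv FF n x xL2 theta U J.
have [Gsym _] := gram_pd.
have Gu : Finv \in unitmx by exact: posdef_unit gram_pd.
have FFsym : FF^T = FF by rewrite /FF trmx_inv Gsym.
have GFF : Finv *m FF = 1%:M by rewrite /FF mulmxV.
have FFG : FF *m Finv = 1%:M by rewrite /FF mulVmx.
pose Th := mxint K (fun t => w t *: (f t *m (x t)^T)).
have eTh : unvec theta = Th by rewrite /theta unvec_theta.
have RIw : RI K w by exact: w_int.
pose q := ip Th (FF *m Th *m U).
have key : forall W, psd U -> 0 <= J - 2 * ip Th (W *m U) + ip W (Finv *m W *m U).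
  by move=> W hU; exact: (I1 _ mK _ w_ge0 RIw _ _ f_L2 _ _ xL2 _ hU W).
have key0 : forall W, psd U -> 0 <= ip W (Finv *m W *m U).
  by move=> W hU; exact: (I0 _ mK _ w_ge0 RIw _ _ f_L2 _ _ hU W).
have eq1 : forall W : 'M[R]_(d, n), ip (FF *m Th) (Finv *m W *m U) = ip Th (W *m U).
  by move=> W; rewrite ip_mull FFsym !mulmxA FFG mul1mx.
have eq2 : U^T = U -> forall W : 'M[R]_(d, n), ip W (Finv *m (FF *m Th) *m U) = ip Th (W *m U).
  by move=> hUs W; rewrite !mulmxA GFF mul1mx ipC ip_mulr hUs.
have eqq : ip (FF *m Th) (Finv *m (FF *m Th) *m U) = q.
  by rewrite eq1.
split.
  move=> hU; have [hUs _] := hU.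
  rewrite quad_tens eTh hUs -/q.
  have := key (FF *m Th) hU; rewrite eqq -/q.
  lra.
move=> hUpd; have [hUs hUp] := hUpd.
have hU : psd U.
  split => // v; have [->|nz] := eqVneq v 0; last exact: ltW (hUp v nz).
  by rewrite mulmx0 mxE.
have rq : (theta^T *m (FF *t U) *m theta) 0 0 = q by rewrite quad_tens eTh hUs.
have lhs : forall om : 'cV[R]_(d * n), 2 * (theta^T *m (1%:M *t U) *m om) 0 0
    - (om^T *m (Finv *t U) *m om) 0 0 =
    2 * ip Th (unvec om *m U) - ip (unvec om) (Finv *m unvec om *m U).
  by move=> om; rewrite !quad_tens eTh hUs mul1mx.
rewrite rq; split; [|split].
- move=> om; rewrite lhs.
  have := key0 (unvec om - FF *m Th) hU.
  rewrite mulmxBr mulmxBl ipBl !ipBr eqq eq1 (eq2 hUs).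
  lra.
- move=> om; rewrite lhs; have := key (unvec om) hU; lra.
- move=> om0; rewrite lhs /om0 unvec_kron1 eTh eqq -/q.
  lra.
Qed.
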